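(* Let $\mathcal A$ be a finite alphabet, and for each $n\ge 0$ let $\sigma_n:\mathcal A^*\to\mathcal A^*$ be a monoid morphism whose incidence matrix $M(\sigma_n)$ is invertible. Suppose the directive sequence $(\sigma_n)_{n\ge0}$ is everywhere growing, and let $X$ be the subshift it generates. Then every invariant measure $\mu$ on $X$ is determined by the values $\mu([a])$, $a\in\mathcal A$; i.e. two invariant measures on $X$ which agree on all letter cylinders $[a]$, $a\in\mathcal A$, are equal.
   Context: For a finite alphabet $\mathcal A$, $\mathcal A^{\mathbb Z}$ carries the product topology and the shift map $T$. A subshift is a closed $T$-invariant ($T(X)=X$) subset. An invariant measure on $X$ is a finite $T$-invariant Borel measure on $\mathcal A^{\mathbb Z}$ with support in $X$. For $w=y_1\cdots y_n\in\mathcal A^*$, the cylinder $[w]$ is $\{x\in\mathcal A^{\mathbb Z}: x_i=y_i,\ i=1,\dots,n\}$. For a monoid morphism $\sigma:\mathcal A^*\to\mathcal A'^*$ the incidence matrix is $M(\sigma)=(|\sigma(a_j)|_{a'_i})_{i,j}$, where $|w|_x$ is the number of occurrences of the letter $x$ in $w$. The subshift generated by the directive sequence $(\sigma_n)_{n\ge0}$ consists of all $x\in\mathcal A^{\mathbb Z}$ such that every finite factor of $x$ is a factor of $\sigma_0\circ\cdots\circ\sigma_{n-1}(a)$ for some $n\ge0$ and $a\in\mathcal A$. The sequence is everywhere growing if $\min_{a\in\mathcal A}|\sigma_0\circ\cdots\circ\sigma_{n-1}(a)|\to\infty$ as $n\to\infty$. *)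

(* Defs.v *)
From HB Require Import structures.
From mathcomp Require Import all_boot all_order all_algebra.
From mathcomp Require Import all_classical all_reals all_analysis.
Set Implicit Arguments. Unset Strict Implicit. Unset Printing Implicit Defensive.
Import Order.TTheory GRing.Theory Num.Theory.
Local Open Scope classical_set_scope.
Local Open Scope ring_scope.

(* A monoid morphism sigma : A^* -> A^* is determined by the images of the
   letters; we represent it by  s : A -> seq A  and extend it to words. *)
Definition morph_app (A : finType) (s : A -> seq A) (w : seq A) : seq A :=
  flatten (map s w).

(* composition sigma_0 o sigma_1 o ... o sigma_{n-1} applied to a word *)
Fixpoint comp_prefix (A : finType) (sig : nat -> A -> seq A) (n : nat)
    (w : seq A) : seq A :=
  match n with
  | 0 => w
  | n'.+1 => comp_prefix sig n' (morph_app (sig n') w)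
  end.

(* incidence matrix M(sigma)_{i,j} = |sigma(a_j)|_{a_i}, letters enumerated
   by enum_val; entries taken in rat *)
Definition incidence_matrix (A : finType) (s : A -> seq A) : 'M[rat]_#|A| :=
  \matrix_(i < #|A|, j < #|A|) (count_mem (enum_val i) (s (enum_val j)))%:R.

Definition everywhere_growing (A : finType) (sig : nat -> A -> seq A) : Prop :=
  forall N : nat, exists n0 : nat, forall n : nat, (n0 <= n)%N ->
    forall a : A, (N <= size (comp_prefix sig n [:: a]))%N.

(* A finite alphabet is nonempty; measurable spaces in MathComp-Analysis
   must be pointed, so we equip A with a chosen letter a0. *)
Definition palph (A : finType) (a0 : A) : Type := A.
HB.instance Definition _ (A : finType) (a0 : A) :=
  Choice.copy (palph a0) A.
HB.instance Definition _ (A : finType) (a0 : A) :=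
  isPointed.Build (palph a0) a0.

Notation fullshift A a0 := {ptws int -> discrete_topology (@palph A a0)}.

Definition shift (A : finType) (a0 : A) (x : fullshift A a0) : fullshift A a0 :=
  fun i => x (i + 1).

Definition borel_shift (A : finType) (a0 : A) :=
  g_sigma_algebraType (@open (fullshift A a0)).

Definition factor_at (A : finType) (a0 : A) (x : fullshift A a0) (i : int) (k : nat)
  : seq A := [seq x (i + j%:Z) | j <- iota 0 k].

Definition gen_subshift (A : finType) (a0 : A) (sig : nat -> A -> seq A)
  : set (fullshift A a0) :=
  [set x | forall (i : int) (k : nat), exists (n : nat) (a : A),
     infix (factor_at x i k) (comp_prefix sig n [:: a])].

Definition cylinder (A : finType) (a0 : A) (w : seq A) : set (borel_shift a0) :=
  [set x : fullshift A a0 | forall j : nat, (j < size w)%N ->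
     x (j%:Z + 1) = nth (x 1) w j].

(* invariant measure on X: finite, shift-invariant Borel measure on A^Z
   with support in X, i.e. mu(A^Z \ X) = 0 *)
Definition invariant_measure_on (A : finType) (a0 : A) (R : realType)
    (X : set (fullshift A a0))
    (mu : {measure set (borel_shift a0) -> \bar R}) : Prop :=
  [/\ (mu setT < +oo)%E,
      (forall B : set (borel_shift a0), measurable B ->
         mu ((@shift A a0) @^-1` B) = mu B)
    & mu (~` X) = 0%E].

(* Main.v *)
Require Import Defs.
From HB Require Import structures.
From mathcomp Require Import all_boot all_order all_algebra.
From mathcomp Require Import all_classical all_reals all_analysis.
From mathcomp Require Import zify ring lra.
Import Order.TTheory GRing.Theory Num.Theory.
Set Implicit Arguments. Unset Strict Implicit. Unset Printing Implicit Defensive.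

Section Comb.
Variable A : eqType.
Implicit Types (w v a b c d l r s : seq A).

Definition pre w v : bool := take (size w) v == w.

Fixpoint occ w v : nat :=
  match v with [::] => 0 | x :: v' => pre w (x :: v') + occ w v' end.

Lemma pre_size w v : pre w v -> size w <= size v.
Proof. by move/eqP=> H; have := congr1 size H; rewrite size_take_min => <-; exact: geq_minr. Qed.

Lemma pre_cat w a b : size w <= size a -> pre w (a ++ b) = pre w a.
Proof. by move=> H; rewrite /pre takel_cat. Qed.

Lemma pre_catW w a b : pre w a -> pre w (a ++ b).
Proof. by move=> H; rewrite pre_cat // pre_size. Qed.

Lemma occ_le_size w v : occ w v <= size v.
Proof. elim: v => //= x v IH; case: (pre w _) => /=; lia. Qed.

Lemma occ_cat_ge w a b : occ w a + occ w b <= occ w (a ++ b).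
Proof.
elim: a => //= x a IH.
have: pre w (x :: a) -> pre w ((x :: a) ++ b) by exact: pre_catW.
case: (pre w (x :: a)); case: (pre w ((x :: a) ++ b)) => //= H; try lia.
Qed.

Lemma occ_cat_le w a b :
  occ w (a ++ b) <= occ w a + occ w b + minn (size a) (size w).
Proof.
elim: a => /= [|x a IH]; first lia.
case: (leqP (size w) (size (x :: a))) => H.
  rewrite -cat_cons pre_cat //. 
  move: H IH => /=; case: (pre w (x :: a)) => /=; lia.
move: H IH => /=; case: (pre w (x :: a)); case: (pre w (x :: a ++ b)) => /=; lia.
Qed.

Lemma occ_cat_le' w a b : occ w (a ++ b) <= occ w a + occ w b + size w.
Proof. have := occ_cat_le w a b; lia. Qed.

Lemma occ_nil w : occ w [::] = 0. Proof. by []. Qed.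

Lemma occ1 (y : A) v : occ [:: y] v = count_mem y v.
Proof.
elim: v => //= x v ->; congr (_ + _).
by rewrite /pre /= take0 eqseq_cons andbT eq_sym.
Qed.

Lemma cat_split_le a b c d : a ++ b = c ++ d -> size a <= size c ->
  exists e, c = a ++ e /\ b = e ++ d.
Proof.
move=> H le; exists (drop (size a) c); split.
  have: take (size a) (a ++ b) = take (size a) (c ++ d) by rewrite H.
  rewrite take_size_cat // takel_cat // => E.
by rewrite -{1}(cat_take_drop (size a) c) -E.
have: drop (size a) (a ++ b) = drop (size a) (c ++ d) by rewrite H.
rewrite drop_size_cat // => ->; rewrite drop_cat; case: ltnP => // H2.
have -> : size a = size c by apply/eqP; rewrite eqn_leq le H2.
by rewrite subnn drop0 drop_size.
Qed.

Variable h : A -> seq A.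
Definition Fl (u : seq A) := flatten (map h u).

Lemma Fl_cons x u : Fl (x :: u) = h x ++ Fl u. Proof. by []. Qed.

Lemma occ_Fl_ge w u : \sum_(x <- u) occ w (h x) <= occ w (Fl u).
Proof.
elim: u => [|x u IH]; first by rewrite big_nil.
rewrite big_cons Fl_cons; apply: leq_trans (occ_cat_ge _ _ _); lia.
Qed.

Lemma occ_Fl_le w u : occ w (Fl u) <= \sum_(x <- u) occ w (h x) + size u * size w.
Proof.
elim: u => [|x u IH]; first by rewrite big_nil.
rewrite big_cons Fl_cons; apply: leq_trans (occ_cat_le' _ _ _) _ => /=; rewrite mulSn; lia.
Qed.

Lemma size_Fl_ge m u : (forall x, m <= size (h x)) -> size u * m <= size (Fl u).
Proof.
move=> H; elim: u => [|x u IH]; first by rewrite mul0n. rewrite Fl_cons size_cat [size _]/= mulSn; have := H x; lia.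
Qed.

Lemma count_Fl (y : A) u : count_mem y (Fl u) = \sum_(x <- u) count_mem y (h x).
Proof.
elim: u => [|x u IH]; first by rewrite big_nil.
by rewrite big_cons Fl_cons count_cat IH.
Qed.

Variable Mx : nat.
Hypothesis hMx : forall x, size (h x) <= Mx.

Lemma pref_dec u v r : v ++ r = Fl u ->
  exists u' p, v = Fl u' ++ p /\ size p <= Mx.
Proof.
elim: u v => [|x u IH] v /=.
  by case: v => // _; exists [::], [::].
move=> H; case: (leqP (size v) (size (h x))) => le.
  have [e [_ _]] := cat_split_le H le.
  by exists [::], v; split => //; apply: leq_trans le (hMx x).
have [e [E1 E2]] := cat_split_le (esym H) (ltnW le).
have [u' [p [E5 Hp]]] := IH _ (esym E2).
by exists (x :: u'), p; rewrite E1 E5 Fl_cons catA.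
Qed.

Lemma inf_dec u l v r : l ++ v ++ r = Fl u ->
  exists s u' p, v = s ++ Fl u' ++ p /\ size s <= Mx /\ size p <= Mx.
Proof.
elim: u l => [|x u IH] l H.
  have: size (l ++ v ++ r) = 0 by rewrite H.
  rewrite !size_cat => Hs; exists [::], [::], [::].
  by case: v {H} Hs => [|? ?] /= Hs; [done | lia].
rewrite Fl_cons in H; case: (leqP (size (h x)) (size l)) => le.
  have [e [E1 E2]] := cat_split_le (esym H) le.
  exact: (IH e (esym E2)).
have [e [E1 E2]] := cat_split_le H (ltnW le).
have se : size e <= Mx.
  by apply: leq_trans (hMx x); rewrite E1 size_cat leq_addl.
case: (leqP (size v) (size e)) => le2.
  have [e' [_ _]] := cat_split_le E2 le2.
  exists v, [::], [::]; rewrite /Fl /= cats0; split => //; split => //.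
  exact: leq_trans le2 se.
have [e' [E3 E4]] := cat_split_le (esym E2) (ltnW le2).
have [u' [p [E5 Hp]]] := pref_dec (esym E4).
by exists e, u', p; rewrite E3 E5.
Qed.

End Comb.

Section Subst.
Local Open Scope ring_scope.
Variable A : finType.
Variable sig : nat -> A -> seq A.

Definition hh (n : nat) (x : A) := comp_prefix sig n [:: x].

Lemma morph_app_cat (s : A -> seq A) u1 u2 :
  morph_app s (u1 ++ u2) = morph_app s u1 ++ morph_app s u2.
Proof. by rewrite /morph_app map_cat flatten_cat. Qed.

Lemma morph_app1 (s : A -> seq A) x : morph_app s [:: x] = s x.
Proof. by rewrite /morph_app /= cats0. Qed.

Lemma comp_prefix_cat n u1 u2 :
  comp_prefix sig n (u1 ++ u2) = comp_prefix sig n u1 ++ comp_prefix sig n u2.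
Proof. by elim: n u1 u2 => //= n IH u1 u2; rewrite morph_app_cat IH. Qed.

Lemma comp_prefix_nil n : comp_prefix sig n [::] = [::].
Proof. by elim: n. Qed.

Lemma comp_prefix_Fl n u : comp_prefix sig n u = Fl (hh n) u.
Proof.
elim: u => [|x u IH]; first by rewrite comp_prefix_nil.
by rewrite -cat1s comp_prefix_cat IH.
Qed.

Lemma comp_prefix_add n k w : exists u, comp_prefix sig (n + k) w = comp_prefix sig n u.
Proof.
elim: k w => [|k IH] w; first by exists w; rewrite addn0.
by rewrite addnS /=; apply: IH.
Qed.

Lemma hhS n x : hh n.+1 x = Fl (hh n) (sig n x).
Proof. by rewrite /hh /= morph_app1 comp_prefix_Fl. Qed.

Lemma sum_list_count (V : nmodType) (F : A -> V) (s : seq A) :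
  \sum_(y <- s) F y = \sum_(a : A) F a *+ count_mem a s.
Proof.
elim: s => [|y s IH]; first by rewrite big_nil big1 // => a _; rewrite mulr0n.
rewrite big_cons IH /=.
under [RHS]eq_bigr => a _ do rewrite mulrnDr.
rewrite big_split /=; congr (_ + _).
rewrite (bigD1 y) //= eqxx mulr1n big1 ?addr0 // => a /negbTE.
by rewrite eq_sym => ->; rewrite mulr0n.
Qed.


Lemma inc0 : incidence_matrix (hh 0) = 1%:M.
Proof.
apply/matrixP => i j; rewrite !mxE /hh /= addn0.
by rewrite (inj_eq enum_val_inj) eq_sym.
Qed.

Lemma incS n : incidence_matrix (hh n.+1) =
  incidence_matrix (hh n) *m incidence_matrix (sig n).
Proof.
apply/matrixP => i j; rewrite !mxE hhS count_Fl natr_sum.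
rewrite (sum_list_count (fun y => (count_mem (enum_val i) (hh n y))%:R)).
rewrite (reindex _ (onW_bij _ (enum_val_bij A))) /=.
by apply: eq_bigr => k _; rewrite !mxE mulr_natr.
Qed.

Lemma inc_unit : (forall n, incidence_matrix (sig n) \in unitmx) ->
  forall n, incidence_matrix (hh n) \in unitmx.
Proof.
move=> H; elim=> [|n IH]; first by rewrite inc0 unitmx1.
by rewrite incS unitmx_mul IH H.
Qed.

Lemma gamma_ex (h : A -> seq A) (o : A -> rat) :
  incidence_matrix h \in unitmx ->
  exists g : A -> rat, forall x, o x = \sum_(b : A) g b * (count_mem b (h x))%:R.
Proof.
move=> Hu; set M := incidence_matrix h.
pose row : 'rV[rat]_#|A| := \row_j o (enum_val j).
pose gr := row *m invmx M.
have E : gr *m M = row by rewrite /gr mulmxKV.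
exists (fun b => gr 0 (enum_rank b)) => x.
move/rowP: E => /(_ (enum_rank x)).
rewrite !mxE enum_rankK => <-.
rewrite (reindex _ (onW_bij _ (enum_rank_bij A))) /=.
by apply: eq_bigr => b _; congr (_ * _); rewrite /M /incidence_matrix mxE !enum_rankK.
Qed.

End Subst.

Section Sums.
Local Open Scope ring_scope.
Variables (A : finType) (R : realType).

Fixpoint SW (K : nat) (F : seq A -> R) : R :=
  match K with 0 => F [::] | K'.+1 => \sum_(b : A) SW K' (fun v => F (b :: v)) end.

Lemma SW_eq K F G : (forall v, size v = K -> F v = G v) -> SW K F = SW K G.
Proof.
elim: K F G => [|K IH] F G H /=; first exact: H.
by apply: eq_bigr => b _; apply: IH => v Hv; apply: H; rewrite /= Hv.
Qed.

Lemma SW_le K F G : (forall v, size v = K -> F v <= G v) -> SW K F <= SW K G.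
Proof.
elim: K F G => [|K IH] F G H /=; first exact: H.
by apply: ler_sum => b _; apply: IH => v Hv; apply: H; rewrite /= Hv.
Qed.

Lemma SW_add K F G : SW K (fun v => F v + G v) = SW K F + SW K G.
Proof.
elim: K F G => [|K IH] F G //=.
by rewrite -big_split /=; apply: eq_bigr => b _; rewrite IH.
Qed.

Lemma SW_scale K c F : SW K (fun v => c * F v) = c * SW K F.
Proof.
elim: K F => [|K IH] F //=.
by rewrite mulr_sumr; apply: eq_bigr => b _; rewrite IH.
Qed.

Lemma SW0 K : SW K (fun _ => 0) = 0.
Proof. by elim: K => //= K IH; rewrite big1. Qed.

Lemma SW_sub K F G : SW K (fun v => F v - G v) = SW K F - SW K G.
Proof.
rewrite -(mulN1r (SW K G)) -(SW_scale K (-1) G) -SW_add.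
by apply: SW_eq => v _; rewrite mulN1r.
Qed.

Lemma SW_sum K (I : finType) (H : I -> seq A -> R) :
  SW K (fun v => \sum_(i : I) H i v) = \sum_(i : I) SW K (H i).
Proof.
elim: K H => [|K IH] H //=.
rewrite exchange_big /=; apply: eq_bigr => b _; exact: IH.
Qed.

Lemma SW_abs K F : `|SW K F| <= SW K (fun v => `|F v|).
Proof.
elim: K F => [|K IH] F //=.
apply: le_trans (ler_norm_sum _ _ _) _.
by apply: ler_sum => b _; exact: IH.
Qed.

Variable f : seq A -> R.
Hypothesis f1 : forall v, f v = \sum_(b : A) f (rcons v b).
Hypothesis f2 : forall v, f v = \sum_(b : A) f (b :: v).

Lemma SW_E K p : SW K (fun v => f (p ++ v)) = f p.
Proof.
elim: K p => [|K IH] p /=; first by rewrite cats0.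
rewrite [RHS]f1; apply: eq_bigr => b _.
by rewrite -IH; apply: SW_eq => v _; rewrite cat_rcons.
Qed.

Lemma SW_Q w K p : (size w <= K)%N ->
  SW K (fun v => f (p ++ v) * (pre w v)%:R) = f (p ++ w).
Proof.
elim: w K p => [|c w IH] K p H.
  by rewrite cats0 -(SW_E K p); apply: SW_eq => v _; rewrite /pre take0 eqxx mulr1.
case: K H => // K H /=.
rewrite (bigD1 c) //= big1 ?addr0.
  rewrite -cat_rcons -(IH K) //; apply: SW_eq => v _.
  by rewrite /pre /= eqseq_cons eqxx /= cat_rcons.
move=> b /negbTE Hb; rewrite -(SW0 K); apply: SW_eq => v _.
by rewrite /pre /= eqseq_cons Hb /= mulr0.
Qed.

Lemma SW_Q0 w K : (K < size w)%N -> SW K (fun v => f v * (pre w v)%:R) = 0.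
Proof.
move=> H; rewrite -(SW0 K); apply: SW_eq => v Hv.
case E: (pre w v); last by rewrite mulr0.
by have := pre_size E; rewrite Hv; lia.
Qed.

Lemma SW_occ w : w != [::] -> forall K,
  SW K (fun v => f v * (occ w v)%:R) = (K.+1 - size w)%:R * f w.
Proof.
move=> Hw; have Hsw : (0 < size w)%N by case: w Hw.
elim=> [|K IH]; first by rewrite /= mulr0 (_ : (1 - size w)%N = 0%N) ?mul0r //; lia.
have -> : SW K.+1 (fun v => f v * (occ w v)%:R) =
    SW K.+1 (fun v => f v * (pre w v)%:R) + SW K (fun v => f v * (occ w v)%:R).
  transitivity (\sum_(b : A) (SW K (fun v => f (b :: v) * (pre w (b :: v))%:R)
      + SW K (fun v => f (b :: v) * (occ w v)%:R))).
    by apply: eq_bigr => b _; rewrite -SW_add; apply: SW_eq => v _ /=; rewrite natrD mulrDr.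
  rewrite big_split /=; congr (_ + _).
  by rewrite -SW_sum; apply: SW_eq => v _; rewrite [in RHS](f2 v) mulr_suml.
rewrite IH; case: (leqP (size w) K.+1) => H.
  rewrite (@SW_Q w K.+1 [::] H) /=.
  have -> : (K.+2 - size w)%N = (1 + (K.+1 - size w))%N by lia.
  by rewrite natrD mulrDl mul1r.
rewrite SW_Q0 // add0r.
by have -> : (K.+2 - size w)%N = (K.+1 - size w)%N by lia.
Qed.

Lemma SW_count (b : A) K :
  SW K (fun v => f v * (count_mem b v)%:R) = K%:R * f [:: b].
Proof.
have := SW_occ (isT : [:: b] != [::]) K; rewrite /= subSS subn0 => <-.
by apply: SW_eq => v _; rewrite occ1.
Qed.

Lemma SW_one K : SW K f = f [::].
Proof. exact: (SW_E K [::]). Qed.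

End Sums.

Section Main.
Local Open Scope ring_scope.
Variables (A : finType) (R : realType) (sig : nat -> A -> seq A).

Lemma PB n w (g : A -> R)
  (hg : forall x, (occ w (hh sig n x))%:R = \sum_(b : A) g b * (count_mem b (hh sig n x))%:R)
  (mn Mx : nat) (e : R) (he : 0 <= e)
  (hMx : forall x, (size (hh sig n x) <= Mx)%N)
  (hmn : forall x, (mn <= size (hh sig n x))%N)
  (hwe : (size w)%:R <= e * mn%:R) u v :
  infix v (Fl (hh sig n) u) ->
  `|(occ w v)%:R - \sum_(b : A) g b * (count_mem b v)%:R| <=
     (size v)%:R * e + ((2 * Mx + 2 * size w)%:R + 2 * Mx%:R * \sum_(b : A) `|g b|).
Proof.
move=> /infixP [l [r E]].
have [s [u' [p [Ev [Hs Hp]]]]] := inf_dec hMx (esym E).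
set F := Fl (hh sig n) u'.
set S := (\sum_(x <- u') occ w (hh sig n x))%N.
have h1 : (S <= occ w v)%N.
  apply: leq_trans (occ_Fl_ge _ _ _) _.
  rewrite Ev; apply: leq_trans (occ_cat_ge _ _ _); apply: leq_trans (leq_addl _ _).
  by apply: leq_trans (occ_cat_ge _ _ _); apply: leq_addr.
have h2 : (occ w v <= size s + S + size u' * size w + size p + 2 * size w)%N.
  rewrite Ev; apply: leq_trans (occ_cat_le' _ _ _) _.
  have := occ_le_size w s; have := occ_le_size w p.
  have := occ_cat_le' w F p; have := occ_Fl_le (hh sig n) w u'.
  rewrite -/F -/S; lia.
have h3 : (size u' * mn <= size v)%N.
  apply: leq_trans (size_Fl_ge u' hmn) _.
  by rewrite Ev !size_cat -/F; lia.
have hS : (S%:R : R) = \sum_(b : A) g b * (count_mem b F)%:R.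
  rewrite /S natr_sum.
  under eq_bigr => x _ do rewrite hg.
  rewrite exchange_big /=; apply: eq_bigr => b _.
  by rewrite -mulr_sumr -natr_sum count_Fl.
have hc : \sum_(b : A) g b * (count_mem b v)%:R =
   S%:R + \sum_(b : A) g b * (count_mem b s + count_mem b p)%:R.
  rewrite hS -big_split /=; apply: eq_bigr => b _.
  by rewrite -mulrDr -natrD Ev !count_cat -/F addnCA.
set G := \sum_(b : A) `|g b|.
have hG : 0 <= G by apply: sumr_ge0 => b _.
have hT : `|\sum_(b : A) g b * (count_mem b s + count_mem b p)%:R| <=
     ((size s + size p)%:R) * G.
  apply: le_trans (ler_norm_sum _ _ _) _.
  rewrite /G mulr_sumr; apply: ler_sum => b _.
  rewrite normrM normr_nat mulrC; apply: ler_wpM2r => //.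
  by rewrite ler_nat; apply: leq_add; apply: count_size.
have hA2 : (size u')%:R * (size w)%:R <= (size v)%:R * e.
  have h3' : (size u')%:R * mn%:R <= (size v)%:R :> R by rewrite -natrM ler_nat.
  have hu : 0 <= (size u')%:R :> R by [].
  nra.
have hB : ((size s + size p)%:R) * G <= 2 * Mx%:R * G.
  apply: ler_wpM2r => //; rewrite -natrM ler_nat; lia.
rewrite hc.
move: hT; rewrite ler_norml => /andP [hT1 hT2].
have h1' : (S%:R : R) <= (occ w v)%:R by rewrite ler_nat.
have h2' : ((occ w v)%:R : R) <= (size s)%:R + S%:R + (size u')%:R * (size w)%:R
     + (size p)%:R + 2 * (size w)%:R.
  by rewrite -!natrM -!natrD ler_nat.
have hs' : ((size s)%:R : R) <= Mx%:R by rewrite ler_nat.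
have hp' : ((size p)%:R : R) <= Mx%:R by rewrite ler_nat.
rewrite natrD !natrM.
rewrite ler_norml; apply/andP; split; lra.
Qed.

End Main.

Section Final.
Local Open Scope ring_scope.
Variables (A : finType) (R : realType) (sig : nat -> A -> seq A).

Definition Lang (v : seq A) := exists m a, infix v (comp_prefix sig m [:: a]).

Definition Bd n := (\sum_(m < n) \sum_(a : A) size (hh sig m a))%N.

Lemma sum_ge (I : finType) (F : I -> nat) i : (F i <= \sum_(j : I) F j)%N.
Proof. by rewrite (bigD1 i) //= leq_addr. Qed.

Lemma Lang_big n v : Lang v -> (Bd n < size v)%N -> exists u, infix v (Fl (hh sig n) u).
Proof.
move=> [m [a Ha]] HB; case: (ltnP m n) => Hmn.
  have H1 : (size (hh sig m a) <= Bd n)%N.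
    apply: leq_trans (sum_ge (fun a => size (hh sig m a)) a) _.
    exact: (sum_ge (fun m : 'I_n => \sum_(a : A) size (hh sig m a)) (Ordinal Hmn)).
  change (comp_prefix sig m [:: a]) with (hh sig m a) in Ha.
  by have := leq_ltn_trans (leq_trans (size_infix Ha) H1) HB; rewrite ltnn.
have [u Hu] := comp_prefix_add sig n (m - n) [:: a].
exists u; rewrite -comp_prefix_Fl -Hu.
by rewrite subnKC.
Qed.

Section Psi.
Variables (n : nat) (w : seq A) (g : A -> R) (mn Mx : nat) (e : R).
Hypotheses (hg : forall x, (occ w (hh sig n x))%:R = \sum_(b : A) g b * (count_mem b (hh sig n x))%:R)
  (he : 0 <= e) (hMx : forall x, (size (hh sig n x) <= Mx)%N)
  (hmn : forall x, (mn <= size (hh sig n x))%N)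
  (hwe : (size w)%:R <= e * mn%:R) (Hw : w != [::]).
Let D : R := (2 * Mx + 2 * size w)%:R + 2 * Mx%:R * \sum_(b : A) `|g b|.

Lemma psi_bound (f : seq A -> R)
  (f1 : forall v, f v = \sum_(b : A) f (rcons v b))
  (f2 : forall v, f v = \sum_(b : A) f (b :: v))
  (f0 : forall v, 0 <= f v) (fL : forall v, f v != 0 -> Lang v) K :
  (Bd n < K)%N ->
  `|(K.+1 - size w)%:R * f w - \sum_(b : A) g b * (K%:R * f [:: b])| <=
    (K%:R * e + D) * f [::].
Proof.
move=> HK.
pose Phi v := (occ w v)%:R - \sum_(b : A) g b * (count_mem b v)%:R.
have -> : (K.+1 - size w)%:R * f w - \sum_(b : A) g b * (K%:R * f [:: b]) =
    SW K (fun v => f v * Phi v).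
  rewrite -(SW_occ f1 f2 Hw K).
  under eq_bigr => b _ do rewrite -(SW_count f1 f2 b K) -SW_scale.
  rewrite -SW_sum -SW_sub; apply: SW_eq => v _.
  rewrite /Phi mulrBr mulr_sumr; congr (_ - _); apply: eq_bigr => b _; ring.
apply: le_trans (SW_abs _ _) _.
rewrite -(SW_one f1 K) -SW_scale; apply: SW_le => v Hv.
rewrite normrM ger0_norm //.
have [->|Hf] := eqVneq (f v) 0; first by rewrite mul0r mulr0.
rewrite mulrC; apply: ler_wpM2r => //.
have [u Hu] : exists u, infix v (Fl (hh sig n) u) by apply: Lang_big; [exact: fL Hf | rewrite Hv].
by have := PB hg he hMx hmn hwe Hu; rewrite Hv.
Qed.

End Psi.

Theorem comb_unique
  (units : forall n, incidence_matrix (sig n) \in unitmx)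
  (grow : everywhere_growing sig) (f g : seq A -> R)
  (f1 : forall v, f v = \sum_(b : A) f (rcons v b))
  (f2 : forall v, f v = \sum_(b : A) f (b :: v))
  (f0 : forall v, 0 <= f v) (fL : forall v, f v != 0 -> Lang v)
  (g1 : forall v, g v = \sum_(b : A) g (rcons v b))
  (g2 : forall v, g v = \sum_(b : A) g (b :: v))
  (g0 : forall v, 0 <= g v) (gL : forall v, g v != 0 -> Lang v)
  (fg : forall b, f [:: b] = g [:: b]) w : f w = g w.
Proof.
have F0e : g [::] = f [::].
  by rewrite (f1 [::]) (g1 [::]); apply: eq_bigr => b _; rewrite fg.
have [->|Hw] := eqVneq w [::]; first by rewrite F0e.
have [//|Hne] := eqVneq (f w) (g w).
exfalso.
set F0 := f [::]; have hF0 : 0 <= F0 := f0 _.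
set d := `|f w - g w|; have hd : 0 < d by rewrite normr_gt0 subr_eq0.
have h4 : 0 < 4 * F0 + 1 by lra.
set e := d / (4 * F0 + 1); have he : 0 < e by rewrite divr_gt0.
have he2 : e * (4 * F0 + 1) = d by rewrite /e divfK // gt_eqF.
set N := (Num.Def.archi_bound ((size w)%:R / e)).+1.
have hwe : (size w)%:R <= e * N%:R.
  have := @archi_boundP _ ((size w)%:R / e) (divr_ge0 (ler0n _ _) (ltW he)).
  rewrite ltr_pdivrMr // => H; rewrite mulrC; apply: ltW; apply: lt_le_trans H _.
  by rewrite ler_pM2r // ler_nat /N.
have [n Hn] := grow N.
have hmn : forall x, (N <= size (hh sig n x))%N by move=> x; exact: Hn.
set Mx := (\sum_(a : A) size (hh sig n a))%N.
have hMx : forall x, (size (hh sig n x) <= Mx)%N by move=> x; exact: sum_ge.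
have [gr Hgr] := gamma_ex (fun x => (occ w (hh sig n x))%:R : rat) (inc_unit units n).
pose g' b : R := ratr (gr b).
have hg : forall x, (occ w (hh sig n x))%:R =
    \sum_(b : A) g' b * (count_mem b (hh sig n x))%:R.
  move=> x; have := congr1 (@ratr R) (Hgr x); rewrite ratr_nat rmorph_sum => ->.
  by apply: eq_bigr => b _; rewrite rmorphM rmorph_nat.
set D : R := (2 * Mx + 2 * size w)%:R + 2 * Mx%:R * \sum_(b : A) `|g' b|.
have hD : 0 <= D.
  rewrite /D; apply: addr_ge0 => //; apply: mulr_ge0; [by apply: mulr_ge0 | by apply: sumr_ge0].
set X := (2 * (size w)%:R * d + 4 * F0 * D) / d.
have hW : 0 <= (size w)%:R :> R by [].
have hX : 0 <= X.
  apply: divr_ge0 (ltW hd); apply: addr_ge0.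
    by apply: mulr_ge0 (ltW hd); apply: mulr_ge0.
  by apply: mulr_ge0 => //; apply: mulr_ge0.
set K := maxn (Bd n).+1 (Num.Def.archi_bound X).
have HK : (Bd n < K)%N by rewrite leq_max leqnn.
have HKX : X < K%:R.
  apply: lt_le_trans (archi_boundP hX) _; rewrite ler_nat leq_max leqnn orbT //.
have Pf := psi_bound hg (ltW he) hMx hmn hwe Hw f1 f2 f0 fL HK.
have Pg := psi_bound hg (ltW he) hMx hmn hwe Hw g1 g2 g0 gL HK.
rewrite F0e -/F0 in Pg.
have Hdiff : (K.+1 - size w)%:R * d <= 2 * ((K%:R * e + D) * F0).
  rewrite /d -normr_nat -normrM mulrBr.
  set Tf := \sum_(b : A) g' b * (K%:R * f [:: b]).
  have -> : (K.+1 - size w)%:R * f w - (K.+1 - size w)%:R * g w =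
     ((K.+1 - size w)%:R * f w - Tf) - ((K.+1 - size w)%:R * g w - Tf) by ring.
  apply: le_trans (ler_normB _ _) _.
  rewrite /Tf; under [X in _ + `|_ - X| <= _]eq_bigr => b _ do rewrite fg.
  by rewrite mulr2n mulrDl mul1r; apply: lerD.
clearbody K.
have hK1 : K%:R - (size w)%:R <= (K.+1 - size w)%:R :> R.
  by rewrite lerBlDr -natrD ler_nat addnC -leq_subLR leq_sub2r.
have hKd : 2 * (size w)%:R * d + 4 * F0 * D < K%:R * d.
  by rewrite -ltr_pdivrMr.
have hk : 0 <= K%:R :> R by exact: ler0n.
have s1 : (K%:R - (size w)%:R) * d <= (K.+1 - size w)%:R * d.
  by rewrite ler_pM2r.
have s2 : 4 * F0 * e <= d by lra.
have s3 : K%:R * (4 * F0 * e) <= K%:R * d by apply: ler_wpM2l.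
lra.
Qed.

End Final.

Section Cyl.
Local Open Scope classical_set_scope.
Local Open Scope ring_scope.
Variables (A : finType) (a0 : A).
Local Notation T := (fullshift A a0).

Definition cylp (p : int) (v : seq A) : set T :=
  [set x | forall j : nat, (j < size v)%N -> x (p + j%:Z) = nth a0 v j].

Lemma cylinder_cylp v : @cylinder A a0 v = cylp 1 v.
Proof.
apply/seteqP; split => x /= H j Hj.
  by rewrite addrC H // (set_nth_default a0).
by rewrite addrC H // (set_nth_default a0).
Qed.

Lemma cylp_nil p : cylp p [::] = setT.
Proof. by apply/seteqP; split => x //= _ j. Qed.

Lemma cylp_cons p c v :
  cylp p (c :: v) = [set x : T | x p = c] `&` cylp (p + 1) v.
Proof.
have E j : p + (j.+1)%:Z = p + 1 + j%:Z by rewrite intS addrA.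
apply/seteqP; split => x /=.
  move=> H; split; first by have := H 0%N isT; rewrite addr0.
  by move=> j Hj; rewrite -E (H j.+1).
move=> [H1 H2] [|j] /= Hj; first by rewrite addr0.
by rewrite E H2.
Qed.

Lemma cylp_open p v : open (cylp p v).
Proof.
elim: v p => [|c v IH] p; first by rewrite cylp_nil; exact: openT.
rewrite cylp_cons; apply: openI (IH _).
have -> : [set x : T | x p = c] = (@proj int (fun _ => discrete_topology (palph a0)) p) @^-1` [set c].
  by [].
apply: open_comp; last exact: discrete_open.
move=> x _; exact: proj_continuous.
Qed.


Lemma cylp_meas p v : measurable (cylp p v : set (borel_shift a0)).
Proof. apply: sub_gen_smallest; exact: cylp_open. Qed.

Lemma cylp_factor p v (x : T) : cylp p v x <-> factor_at x p (size v) = v.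
Proof.
split => [H|H j Hj].
  rewrite /factor_at -[RHS](take_size v) -(map_nth_iota0 a0 (leqnn _)).
  by apply/eq_in_map => j; rewrite mem_iota add0n => /andP [_ Hj]; exact: H.
rewrite -[in RHS]H /factor_at (nth_map 0%N) ?size_iota // nth_iota //.
Qed.

Variable sig : nat -> A -> seq A.

Definition Yset (i : int) (k : nat) : set T :=
  [set x | exists n a, infix (factor_at x i k) (comp_prefix sig n [:: a])].

Lemma Yset_meas i k : measurable (Yset i k : set (borel_shift a0)).
Proof.
have -> : Yset i k = \bigcup_(t in [set t : k.-tuple A | Lang sig (val t)]) cylp i t.
  apply/seteqP; split => x /=.
    move=> [n [a H]].
    have Hs : size (factor_at x i k) == k by rewrite size_map size_iota.
    exists (Tuple Hs); first by exists n, a.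
    by apply/cylp_factor; rewrite /= (eqP Hs).
  move=> [t [n [a Ht]] /cylp_factor]; rewrite size_tuple => Hf.
  by exists n, a; rewrite Hf.
apply: fin_bigcup_measurable; first exact: finite_finset.
by move=> t _; exact: cylp_meas.
Qed.

Lemma X_compl_meas : measurable (~` @gen_subshift A a0 sig : set (borel_shift a0)).
Proof.
have -> : ~` @gen_subshift A a0 sig = \bigcup_(q : int * nat) ~` Yset q.1 q.2.
  apply/seteqP; split => x /=.
    move/existsNP => [i /existsNP [k H]]; by exists (i, k).
  by move=> [[i k] _ H] H2; apply: H; exact: H2.
apply: countable_bigcupT_measurable; first exact: countableP.
by move=> q; apply: measurableC; exact: Yset_meas.
Qed.

End Cyl.

Section Meas.
Local Open Scope classical_set_scope.
Local Open Scope ring_scope.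
Variables (A : finType) (a0 : A) (R : realType) (sig : nat -> A -> seq A).
Local Notation T := (fullshift A a0).
Local Notation B := (borel_shift a0).
Local Notation cyl := (@cylp A a0).
Variable mu : {measure set B -> \bar R}.
Hypothesis Hmu : invariant_measure_on (@gen_subshift A a0 sig) mu.

Lemma bigU_mem (C : A -> set T) s x :
  (\big[setU/set0]_(b <- s) C b) x <-> exists2 b, b \in s & C b x.
Proof.
elim: s => [|c s IH]; first by rewrite big_nil; split => // [[]].
rewrite big_cons; split.
  by case=> [H|/IH [b Hb H]]; [exists c; rewrite ?mem_head | exists b; rewrite // in_cons Hb orbT].
by move=> [b]; rewrite in_cons => /orP [/eqP -> H|Hb H]; [left | right; apply/IH; exists b].
Qed.

Lemma measure_bigU (C : A -> set B) s : uniq s -> (forall b, measurable (C b)) ->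
  (forall b c, b != c -> C b `&` C c = set0) ->
  mu (\big[setU/set0]_(b <- s) C b) = (\sum_(b <- s) mu (C b))%E.
Proof.
move=> + Hm Hd; elim: s => [|c s IH]; first by rewrite !big_nil measure0.
move=> /= /andP [Hc Hu]; rewrite !big_cons measureU //.
- by congr (_ + _)%E; exact: IH.
- by apply: bigsetU_measurable.
apply/seteqP; split => x //= [H1 /bigU_mem [b Hb H2]].
have Hcb : c != b by apply/eqP => E; rewrite E Hb in Hc.
by have := Hd _ _ Hcb; move/seteqP => [/(_ x (conj H1 H2))].
Qed.

Lemma cylp_rcons p v :
  cyl p v = \big[setU/set0]_(b <- index_enum A) cyl p (rcons v b).
Proof.
apply/seteqP; split => x.
  move=> H; apply/bigU_mem; exists (x (p + (size v)%:Z)); first exact: mem_index_enum.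
  move=> j; rewrite size_rcons ltnS leq_eqVlt nth_rcons => /orP [/eqP ->|Hj].
    by rewrite ltnn eqxx.
  by rewrite Hj; exact: H.
move=> /bigU_mem [b _ H] j Hj.
by rewrite H ?size_rcons 1?ltnW // nth_rcons Hj.
Qed.

Lemma cylp_rcons_disj p v b c : b != c ->
  cyl p (rcons v b) `&` cyl p (rcons v c) = set0.
Proof.
move=> Hbc; apply/seteqP; split => x //= [H1 H2].
have E1 : x (p + (size v)%:Z) = b by rewrite H1 ?size_rcons // nth_rcons ltnn eqxx.
have E2 : x (p + (size v)%:Z) = c by rewrite H2 ?size_rcons // nth_rcons ltnn eqxx.
by move: Hbc; rewrite -E1 -E2 eqxx.
Qed.

Lemma cylp_consU p v :
  cyl (p + 1) v = \big[setU/set0]_(b <- index_enum A) cyl p (b :: v).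
Proof.
apply/seteqP; split => x.
  move=> H; apply/bigU_mem; exists (x p); first exact: mem_index_enum.
  by rewrite cylp_cons.
by move=> /bigU_mem [b _]; rewrite cylp_cons => -[].
Qed.

Lemma cylp_cons_disj p v b c : b != c ->
  cyl p (b :: v) `&` cyl p (c :: v) = set0.
Proof.
move=> Hbc; apply/seteqP; split => x //=; rewrite !cylp_cons => -[[H1 _] [H2 _]].
by move: Hbc; rewrite -H1 -H2 eqxx.
Qed.

Lemma shift_cylp p v : (@Defs.shift A a0) @^-1` (cyl p v) = cyl (p + 1) v.
Proof.
apply/seteqP; split => x /= H j Hj; rewrite -H //= /Defs.shift; congr x; ring.
Qed.


Lemma mu_fin p v : mu (cyl p v) \is a fin_num.
Proof.
case: Hmu => Hfin _ _.
rewrite ge0_fin_numE ?measure_ge0 //; apply: le_lt_trans Hfin.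
apply: le_measure => //; rewrite inE; [exact: cylp_meas | exact: measurableT].
Qed.

Lemma mu_shift p v : mu (cyl (p + 1) v) = mu (cyl p v).
Proof. case: Hmu => _ Hinv _; rewrite -shift_cylp Hinv //; exact: cylp_meas. Qed.

Lemma mu_cylp_any p v : mu (cyl p v) = mu (cyl 1 v).
Proof.
have -> : p = 1 + (p - 1) by ring.
case: (p - 1) => n.
  elim: n => [|n IH]; first by rewrite addr0.
  have -> : 1 + (n.+1)%:Z = (1 + n%:Z) + 1 by rewrite intS; ring.
  by rewrite mu_shift.
rewrite NegzE; elim: n => [|n IH].
  by rewrite (_ : 1 + - (1%:Z) = 0) // -(mu_shift 0) add0r.
have E : 1 - (n.+1)%:Z = (1 - (n.+2)%:Z) + 1 by rewrite !intS; ring.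
by rewrite -IH E mu_shift.
Qed.

Definition fm (v : seq A) : R := fine (mu (cyl 1 v)).

Lemma fmE v : mu (cyl 1 v) = (fm v)%:E.
Proof. by rewrite fineK // mu_fin. Qed.

Lemma fm1 v : fm v = \sum_(b : A) fm (rcons v b).
Proof.
apply: EFin_inj; rewrite -sumEFin -fmE.
under eq_bigr => b _ do rewrite -fmE.
rewrite {1}cylp_rcons measure_bigU //; first exact: index_enum_uniq.
- by move=> b; exact: cylp_meas.
- by move=> b c; exact: cylp_rcons_disj.
Qed.

Lemma fm2 v : fm v = \sum_(b : A) fm (b :: v).
Proof.
apply: EFin_inj; rewrite -sumEFin -fmE.
under eq_bigr => b _ do rewrite -fmE.
rewrite -(mu_cylp_any (1 + 1)) cylp_consU measure_bigU //; first exact: index_enum_uniq.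
- by move=> b; exact: cylp_meas.
- by move=> b c; exact: cylp_cons_disj.
Qed.

Lemma fm0 v : 0 <= fm v.
Proof. exact/fine_ge0/measure_ge0. Qed.

Lemma fmL v : fm v != 0 -> Lang sig v.
Proof.
move=> Hf; have [//|HL] := pselect (Lang sig v).
exfalso; move/eqP: Hf; apply.
case: Hmu => _ _ Hnull.
rewrite /fm (subset_measure0 _ (@X_compl_meas A a0 sig) _ Hnull) //.
- exact: cylp_meas.
move=> x Hx HX; apply: HL.
have [n [a H]] := HX 1 (size v).
by exists n, a; move/cylp_factor: Hx => <-.
Qed.

End Meas.

Section Uniq.
Local Open Scope classical_set_scope.
Local Open Scope ring_scope.
Variables (A : finType) (a0 : A).
Local Notation T := (fullshift A a0).
Local Notation B := (borel_shift a0).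
Local Notation K := (fun _ : int => discrete_topology (palph a0)).
Local Notation cyl := (@cylp A a0).

Lemma open_near (O : set T) (x : T) : open O -> O x ->
  exists N : nat, forall y : T, (forall i : int, (absz i < N)%N -> y i = x i) -> O y.
Proof.
move=> oO Ox.
pose Bn (N : nat) := [set y : T | forall i : int, (absz i < N)%N -> y i = x i].
pose F := filter_from [set: nat] Bn.
have FF : Filter F.
  apply: filter_from_filter; first by exists 0%N.
  move=> i j _ _; exists (maxn i j) => // y Hy; split => k Hk; apply: Hy;
    rewrite leq_max Hk ?orbT //.
have cv : F --> (x : product_topology_def K).
  apply/cvg_sup => i.
  have surj : [set f i | f in [set: T]] = [set: palph a0].
    by apply/seteqP; split => // a _; exists (fun _ => a).
  apply/cvg_image => //.
  move=> C; rewrite nbhs_principalE => HC.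
  have Cx : C (x i) by apply: HC.
  exists ((fun f : T => f i) @^-1` C); last exact: image_preimage.
  by exists (absz i).+1 => // y Hy; rewrite /= Hy.
have : F O.
  apply: cv; apply: open_nbhs_nbhs; split => //.
by move=> [N _ HN]; exists N => y Hy; apply: HN.
Qed.

Definition Gsys : set (set B) :=
  [set C | C = set0 \/ exists (N : nat) (t : (N.*2).-tuple A), C = cyl (- N%:Z) t].

Lemma cyl_sub N M (t s : seq A) (x : T) : (N <= M)%N -> size t = N.*2 ->
  size s = M.*2 -> cyl (- N%:Z) t x -> cyl (- M%:Z) s x ->
  cyl (- M%:Z) s `<=` cyl (- N%:Z) t.
Proof.
move=> NM Ht Hs Hxt Hxs y Hy j Hj.
have Hj' : (M - N + j < size s)%N by rewrite Hs; rewrite Ht in Hj; rewrite -!addnn in Hj *; lia.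
have E : - N%:Z + j%:Z = - M%:Z + (M - N + j)%:Z by lia.
by rewrite E Hy // -(Hxs _ Hj') -E Hxt.
Qed.

Lemma G_setI : setI_closed Gsys.
Proof.
move=> C1 C2 [->|[N [t ->]]]; first by left; rewrite set0I.
move=> [->|[M [s ->]]]; first by left; rewrite setI0.
have [|/eqP/set0P [x [Hx1 Hx2]]] := pselect (cyl (- N%:Z) t `&` cyl (- M%:Z) s = set0).
  by left.
right; case: (leqP N M) => NM.
  exists M, s; apply/seteqP; split => y; first by case.
  move=> Hy; split => //.
  exact: (cyl_sub NM (size_tuple t) (size_tuple s) Hx1 Hx2).
exists N, t; apply/seteqP; split => y; first by case.
move=> Hy; split => //.
exact: (cyl_sub (ltnW NM) (size_tuple s) (size_tuple t) Hx2 Hx1).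
Qed.

Lemma open_sub_G (O : set B) : open (O : set T) -> <<s Gsys >> O.
Proof.
move=> oO.
have -> : O = \bigcup_(N : nat)
    \bigcup_(t in [set t : (N.*2).-tuple A | cyl (- N%:Z) t `<=` O]) cyl (- N%:Z) t.
  apply/seteqP; split => x; last by move=> [N _ [t Ht Hx]]; exact: Ht.
  move=> Ox; have [N HN] := open_near oO Ox.
  have Hs : size (factor_at x (- N%:Z) N.*2) == N.*2 by rewrite size_map size_iota.
  exists N => //; exists (Tuple Hs); last by apply/cylp_factor; rewrite /= (eqP Hs).
  move=> y /= Hy; apply: HN => i Hi.
  have Hx : cyl (- N%:Z) (Tuple Hs) x by apply/cylp_factor; rewrite /= (eqP Hs).
  pose j := absz (i + N%:Z).
  have Ej : i = - N%:Z + j%:Z by rewrite /j; lia.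
  have Hj : (j < size (Tuple Hs))%N by rewrite /= (eqP Hs) /j; lia.
  by rewrite Ej Hy // Hx.
apply: (@bigcupT_measurable _ (g_sigma_algebraType Gsys)) => N.
apply: (@fin_bigcup_measurable _ (g_sigma_algebraType Gsys)); first exact: finite_finset.
by move=> t _; apply: sub_gen_smallest; right; exists N, t.
Qed.

Lemma G_sub_open : Gsys `<=` @measurable _ B.
Proof.
move=> C [->|[N [t ->]]]; first exact: measurable0.
exact: cylp_meas.
Qed.

Lemma meas_eq : @measurable _ B = <<s Gsys >>.
Proof.
apply/seteqP; split.
  apply: smallest_sub; first exact: smallest_sigma_algebra.
  exact: open_sub_G.
apply: smallest_sub; first exact: smallest_sigma_algebra.
exact: G_sub_open.
Qed.

End Uniq.

Unset Implicit Arguments.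
Local Open Scope classical_set_scope.
Local Open Scope ring_scope.
Theorem corollary2 (A : finType) (a0 : A) (R : realType)
    (sig : nat -> A -> seq A) :
  (forall n : nat, incidence_matrix (sig n) \in unitmx) ->
  everywhere_growing sig ->
  forall mu nu : {measure set (borel_shift a0) -> \bar R},
    invariant_measure_on (@gen_subshift A a0 sig) mu ->
    invariant_measure_on (@gen_subshift A a0 sig) nu ->
    (forall a : A, mu (@cylinder A a0 [:: a]) = nu (@cylinder A a0 [:: a])) ->
    forall B : set (borel_shift a0), measurable B -> mu B = nu B.
Proof.
move=> units grow mu nu Hmu Hnu Hab.
have feq : forall w, fm mu w = fm nu w.
  apply: (comb_unique units grow (fm1 Hmu) (fm2 Hmu) (@fm0 _ _ _ mu) (fmL Hmu)
     (fm1 Hnu) (fm2 Hnu) (@fm0 _ _ _ nu) (fmL Hnu)).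
  by move=> b; rewrite /fm -cylinder_cylp Hab.
have cyl_eq : forall p v, mu (@cylp A a0 p v) = nu (@cylp A a0 p v).
  by move=> p v; rewrite (mu_cylp_any Hmu) (mu_cylp_any Hnu) (fmE Hmu) (fmE Hnu) feq.
apply: (measure_unique (@Gsys A a0) (fun _ => setT)).
- exact: meas_eq.
- exact: G_setI.
- move=> _; right; exists 0%N, [tuple]; by rewrite cylp_nil.
- by apply/seteqP; split => // x _; exists 0%N.
- by move=> C [->|[N [t ->]]]; [rewrite !measure0 | exact: cyl_eq].
- by move=> _; case: Hmu.
Qed.
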